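(* For any $a,b,c$, the 1-2 model on the periodic honeycomb lattice, with signature $(0,c,b,a,a,b,c,0)$ at every vertex, is orthogonally realizable; specifically, taking on every edge the base change matrix $T=\begin{pmatrix}\cos\frac{3\pi}4&\sin\frac{3\pi}4\\-\sin\frac{3\pi}4&\cos\frac{3\pi}4\end{pmatrix}$ yields matchgate signatures satisfying the parity constraint.
   Context: Signatures are indexed by local configurations $000,001,\dots,111$ of the incident $(a,b,c)$-edges. A realization assigns to each edge an invertible $2\times2$ matrix $T_e$ and to each vertex a matchgate signature $m_v$ with $m_v=(T_a\otimes T_b\otimes T_c)r_v$ at black and $m_v=((T_a\otimes T_b\otimes T_c)^t)^{-1}r_v$ at white vertices, each $m_v$ satisfying the parity constraint (vanishing on all binary strings with an even number of $1$'s, or on all with an odd number); the model is orthogonally realizable if a realization exists with all $T_e$ orthogonal. *)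

(* Defs.v *)
From Stdlib Require Import Reals ZArith.
Open Scope R_scope.

(* 2x2 real matrices, indexed by bool (false = 0, true = 1). *)
Definition mat2 := bool -> bool -> R.

Definition sumb (f : bool -> R) : R := f false + f true.

Definition mmul2 (A B : mat2) : mat2 := fun i j => sumb (fun k => A i k * B k j).
Definition tr2 (A : mat2) : mat2 := fun i j => A j i.
Definition id2 : mat2 := fun i j => if Bool.eqb i j then 1 else 0.
Definition det2 (A : mat2) : R := A false false * A true true - A false true * A true false.
Definition invertible2 (A : mat2) : Prop := det2 A <> 0.
(* explicit inverse of a 2x2 matrix (meaningful when det2 A <> 0) *)
Definition inv2 (A : mat2) : mat2 := fun i j =>
  match i, j with
  | false, false => A true true / det2 A
  | false, true  => - A false true / det2 A
  | true, false  => - A true false / det2 A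
  | true, true   => A false false / det2 A
  end.
Definition orthogonal2 (A : mat2) : Prop := mmul2 (tr2 A) A = id2.

(* Signatures indexed by local configurations (x_a, x_b, x_c) in {0,1}^3;
   the configuration x_a x_b x_c corresponds to the binary index 4x_a+2x_b+x_c. *)
Definition sig3 := bool -> bool -> bool -> R.

Definition kron3_apply (Ta Tb Tc : mat2) (r : sig3) : sig3 := fun x y z =>
  sumb (fun x' => sumb (fun y' => sumb (fun z' =>
    Ta x x' * Tb y y' * Tc z z' * r x' y' z'))).

(* ((Ta ⊗ Tb ⊗ Tc)^t)^{-1} r, using ((A⊗B⊗C)^t)^{-1} = (A^t)^{-1}⊗(B^t)^{-1}⊗(C^t)^{-1} *)
Definition kron3_invtr_apply (Ta Tb Tc : mat2) (r : sig3) : sig3 :=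
  kron3_apply (inv2 (tr2 Ta)) (inv2 (tr2 Tb)) (inv2 (tr2 Tc)) r.

Definition nb (b : bool) : nat := if b then 1%nat else 0%nat.
Definition odd_weight (x y z : bool) : bool := Nat.odd (nb x + nb y + nb z).

Definition parity_constraint (m : sig3) : Prop :=
  (forall x y z, odd_weight x y z = false -> m x y z = 0) \/
  (forall x y z, odd_weight x y z = true -> m x y z = 0).

Definition sig_onetwo (a b c : R) : sig3 := fun x y z =>
  match x, y, z with
  | false, false, false => 0
  | false, false, true  => c
  | false, true,  false => b
  | false, true,  true  => a
  | true,  false, false => a
  | true,  false, true  => b
  | true,  true,  false => c
  | true,  true,  true  => 0
  end.

Inductive dir := Da | Db | Dc.
(* vertices: (i,j,black?) ; edges: (i,j,d) = edge of direction d at black vertex (i,j) *)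
Definition hvertex : Type := (Z * Z * bool)%type.
Definition hedge : Type := (Z * Z * dir)%type.

(* black (i,j) is joined to white (i,j) by an a-edge, to white (i+1,j) by a
   b-edge and to white (i,j+1) by a c-edge. *)
Definition incident (v : hvertex) (d : dir) : hedge :=
  match v with
  | (i, j, true) => (i, j, d)
  | (i, j, false) =>
      match d with
      | Da => (i, j, Da)
      | Db => ((i - 1)%Z, j, Db)
      | Dc => (i, (j - 1)%Z, Dc)
      end
  end.

Definition vertex_sig (T : hedge -> mat2) (r : hvertex -> sig3) (v : hvertex) : sig3 :=
  let Ta := T (incident v Da) in
  let Tb := T (incident v Db) in
  let Tc := T (incident v Dc) in
  match v with
  | (_, _, true) => kron3_apply Ta Tb Tc (r v)
  | (_, _, false) => kron3_invtr_apply Ta Tb Tc (r v)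
  end.

Definition is_realization (T : hedge -> mat2) (r : hvertex -> sig3) : Prop :=
  (forall e, invertible2 (T e)) /\ (forall v, parity_constraint (vertex_sig T r v)).

Definition orthogonally_realizable (r : hvertex -> sig3) : Prop :=
  exists T : hedge -> mat2, is_realization T r /\ forall e, orthogonal2 (T e).

Definition T34 : mat2 := fun i j =>
  match i, j with
  | false, false => cos (3 * PI / 4)
  | false, true  => sin (3 * PI / 4)
  | true, false  => - sin (3 * PI / 4)
  | true, true   => cos (3 * PI / 4)
  end.

(* Main.v *)
Require Import Defs.
From Stdlib Require Import Reals ZArith Lra FunctionalExtensionality.
Open Scope R_scope.

Lemma s34 : sin (3 * PI / 4) = 1 / sqrt 2.
Proof.
  replace (3 * PI / 4) with (PI - PI / 4) by field.
  rewrite sin_PI_x. apply sin_PI4.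
Qed.

Lemma c34 : cos (3 * PI / 4) = - sin (3 * PI / 4).
Proof.
  rewrite s34. replace (3 * PI / 4) with (PI - PI / 4) by field.
  rewrite cos_minus, cos_PI, sin_PI, cos_PI4. ring.
Qed.

Lemma ss : sin (3 * PI / 4) * sin (3 * PI / 4) = 1 / 2.
Proof.
  rewrite s34. assert (H := sqrt_sqrt 2). assert (0 < sqrt 2) by (apply sqrt_lt_R0; lra).
  replace (1 / sqrt 2 * (1 / sqrt 2)) with (1 / (sqrt 2 * sqrt 2)) by (field; lra). rewrite H by lra. lra.
Qed.

Lemma detT : det2 T34 = 1.
Proof. unfold det2, T34. rewrite c34. pose proof ss. nra. Qed.

Lemma invT : inv2 (tr2 T34) = T34.
Proof.
  apply functional_extensionality; intro i; apply functional_extensionality; intro j.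
  unfold inv2. replace (det2 (tr2 T34)) with 1 by (rewrite <- detT; unfold det2, tr2; ring).
  destruct i, j; unfold tr2, T34; field.
Qed.

Lemma orthT : orthogonal2 T34.
Proof.
  unfold orthogonal2.
  apply functional_extensionality; intro i; apply functional_extensionality; intro j.
  unfold mmul2, tr2, sumb, id2, T34; rewrite c34; pose proof ss.
  destruct i, j; simpl; lra.
Qed.

Lemma parT (a b c : R) : parity_constraint (kron3_apply T34 T34 T34 (sig_onetwo a b c)).
Proof.
  left. intros x y z H.
  destruct x, y, z; simpl in H; try discriminate;
  unfold kron3_apply, sumb, T34, sig_onetwo; rewrite c34; ring.
Qed.

Lemma realT (a b c : R) : is_realization (fun _ => T34) (fun _ => sig_onetwo a b c).
Proof.
  split.
  - intro e. unfold invertible2. rewrite detT. lra.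
  - intros [[i j] [|]]; simpl.
    + apply parT.
    + unfold kron3_invtr_apply. rewrite invT. apply parT.
Qed.

Theorem mainTheorem18 (a b c : R) :
  orthogonally_realizable (fun _ => sig_onetwo a b c) /\
  is_realization (fun _ => T34) (fun _ => sig_onetwo a b c) /\
  orthogonal2 T34.
Proof.
  split; [| split; [apply realT | apply orthT]].
  exists (fun _ => T34). split; [apply realT | intro; apply orthT].
Qed.
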